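(* Assume $a+b\le1$. Then the marginal law $\nu$ of $\omega$ under $\mathbf P$, viewed as a measure on subsets of $\mathsf E$, satisfies the FKG lattice condition: $\nu(\xi_1\cap\xi_2)\,\nu(\xi_1\cup\xi_2)\ge\nu(\xi_1)\,\nu(\xi_2)$ for all $\xi_1,\xi_2\subseteq\mathsf E$.
   Context: Let $M$ be a compact orientable surface without boundary, or the plane. Let $\mathsf G=(\mathsf V,\mathsf E)$ be a finite connected graph embedded in $M$ with all faces topological discs, and $\mathsf G^*=(\mathsf U,\mathsf E^* )$ its embedded dual ($\mathsf U$ = faces of $\mathsf G$); $e^*$ is the dual edge crossing $e$, $\xi^*=\{e^*:e\in\xi\}$. Fix integers $q,q'\ge1$, finite $Q,Q'\subset\mathbb C$ with $Q=-Q$, $Q'=-Q'$, $|Q|=q$, $|Q'|=q'$, and $a,b\in(0,1]$. For $\sigma:\mathsf V\to Q$, $\eta(\sigma)\subseteq\mathsf E^*$ is the set of $e^*$ whose primal $e$ has endpoints with different $\sigma$-values; for $\sigma':\mathsf U\to Q'$, $\eta(\sigma')\subseteq\mathsf E$ is the set of $e$ whose dual $e^*$ has endpoints with different $\sigma'$-values. $\mathbf P(\sigma,\sigma')\propto a^{|\eta(\sigma')|}b^{|\eta(\sigma)|}$ on $\Sigma=\{(\sigma,\sigma'):\eta(\sigma)^*\cap\eta(\sigma')=\emptyset\}$. Percolation (for $a+b\le1$): given $(\sigma,\sigma')$, every edge of $\eta(\sigma')$ and every dual edge of $\eta(\sigma)$ is open; for each pair $(e,e^* )$ with $e\notin\eta(\sigma')$,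 $e^*\notin\eta(\sigma)$, independently, ($e$ open, $e^*$ closed) w.p. $a$, ($e$ closed, $e^*$ open) w.p. $b$, both open w.p. $1-a-b$. $\omega\subseteq\mathsf E$ is the set of open primal edges; $\mathbf P$ is the joint law. *)

(* Defs.v *)
From HB Require Import structures.
From mathcomp Require Import all_boot all_order all_algebra all_fingroup.
From mathcomp Require Import finmap.
From mathcomp Require Import complex.
Set Implicit Arguments. Unset Strict Implicit. Unset Printing Implicit Defensive.
Import Order.TTheory GRing.Theory Num.Theory.
Local Open Scope ring_scope.

(* Cellularly embedded graphs in a compact orientable surface are encoded,   *)
(* as usual, by combinatorial maps (rotation systems):                        *)
(*   - E : finType is the set of edges; the darts are E * bool, the two      *)
(*     half-edges of e being (e,true) and (e,false);                         *)
(*   - rot : {perm E * bool} is the rotation (cyclic order of the darts      *)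
(*     around each vertex);  vertices = orbits of rot;                       *)
(*   - faces = orbits of fperm rot := rot \o alpha.                           *)
(* The embedded dual edge e^* joins the faces of the two darts of e.         *)

Definition alpha (E : finType) (d : E * bool) : E * bool := (d.1, ~~ d.2).

Definition fperm (E : finType) (rot : {perm E * bool}) (d : E * bool) :=
  rot (alpha d).

Definition same_vertex (E : finType) (rot : {perm E * bool}) (d d' : E * bool) :=
  fconnect rot d d'.
Definition same_face (E : finType) (rot : {perm E * bool}) (d d' : E * bool) :=
  fconnect (fperm rot) d d'.

Definition map_connected (E : finType) (rot : {perm E * bool}) :=
  forall d d' : E * bool,
    connect [rel x y | (y == rot x) || (y == alpha x)] d d'.

(* Spin configurations.  A spin on the vertices is a function on darts that  *)
(* is constant on vertices (rot-orbits); a spin on the faces is a function   *)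
(* on darts constant on faces (fperm-orbits).  This is in bijection with     *)
(* functions V -> Q, resp. U -> Q'.                                          *)

Section Model.
Variables (R : rcfType) (E : finType) (rot : {perm E * bool}).
Variables (Q Q' : {fset R[i]}).

Definition vspin (s : {ffun E * bool -> Q}) : bool :=
  [forall d, s (rot d) == s d].
Definition fspin (s : {ffun E * bool -> Q'}) : bool :=
  [forall d, s (fperm rot d) == s d].

(* eta(sigma) : set of edges e whose dual e^* is in eta(sigma), i.e. the     *)
(* primal endpoints of e carry different sigma-values.                        *)
Definition eta_v (s : {ffun E * bool -> Q}) : {set E} :=
  [set e | val (s (e, true)) != val (s (e, false))].
(* eta(sigma') : set of edges e whose dual endpoints (faces of the two darts *)
(* of e) carry different sigma'-values.                                       *)
Definition eta_f (s' : {ffun E * bool -> Q'}) : {set E} :=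
  [set e | val (s' (e, true)) != val (s' (e, false))].

Definition admissible (s : {ffun E * bool -> Q}) (s' : {ffun E * bool -> Q'}) :=
  [&& vspin s, fspin s' & [disjoint eta_v s & eta_f s']].

Variables (a b : R).

Definition spin_weight s s' : R :=
  if admissible s s' then a ^+ #|eta_f s'| * b ^+ #|eta_v s| else 0.

Definition Zpart : R := \sum_s \sum_s' spin_weight s s'.

(* conditional law of the state (e open?, e^* open?) of the pair (e, dual e)  *)
(* given (sigma, sigma').  Edges of eta(sigma') are open (their duals closed, *)
(* since they separate different sigma'-values); dual edges of eta(sigma)     *)
(* are open (their primal edges closed).                                      *)
Definition pair_law s s' (e : E) (o os : bool) : R :=
  if e \in eta_f s' then (o && ~~ os)%:R
  else if e \in eta_v s then (~~ o && os)%:R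
  else if o && ~~ os then a
  else if ~~ o && os then b
  else if o && os then 1 - a - b
  else 0.

Definition joint_law s s' (w ws : {set E}) : R :=
  spin_weight s s' / Zpart * \prod_e pair_law s s' e (e \in w) (e \in ws).

Definition nu (xi : {set E}) : R :=
  \sum_s \sum_s' \sum_(ws : {set E}) joint_law s s' xi ws.

End Model.

(* Main.v *)
Require Import Defs.
From HB Require Import structures.
From mathcomp Require Import all_boot all_order all_algebra all_fingroup.
From mathcomp Require Import finmap.
From mathcomp Require Import complex.
From mathcomp Require Import ring lra zify.
Import Order.TTheory GRing.Theory Num.Theory.
Set Implicit Arguments. Unset Strict Implicit. Unset Printing Implicit Defensive.

Section Spin.
Variables (E T : finType) (p : E * bool -> E * bool).

Definition SS (X : {set E}) : {set {ffun E * bool -> T}} :=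
  [set s : {ffun E * bool -> T} | [forall d, s (p d) == s d] && [forall e in X, s (e, true) == s (e, false)]].

Definition rr (X : {set E}) : rel (E * bool) :=
  fun x y => [|| y == p x, x == p y | (x.1 \in X) && (y == (x.1, ~~ x.2))].

Lemma rr_sym X : symmetric (rr X).
Proof.
move=> [e1 c1] [e2 c2]; rewrite /rr /=.
apply/idP/idP => /or3P [/eqP->|/eqP->|/andP[H /eqP [-> ->]]]; rewrite ?eqxx ?orbT //=;
by rewrite negbK H eqxx !orbT.
Qed.

Lemma inSS X s : (s \in SS X) = [forall x, forall y, rr X x y ==> (s x == s y)].
Proof.
rewrite inE; apply/idP/idP.
- case/andP => /forallP H1 /forallP H2; apply/forallP => x; apply/forallP => y.
  apply/implyP => /or3P [/eqP->|/eqP->|/andP[H /eqP ->]].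
  + by rewrite eq_sym H1.
  + by rewrite H1.
  + case: x H => e [] /= H.
    * by have := H2 e; rewrite H.
    * by have := H2 e; rewrite H /= eq_sym.
- move=> /forallP H; apply/andP; split.
  + apply/forallP => d; have /forallP /(_ (p d)) := H d.
    by rewrite /rr eqxx /= eq_sym.
  + apply/forallP => e; apply/implyP => He.
    have /forallP /(_ (e, false)) := H (e, true).
    by rewrite /rr /= He eqxx !orbT.
Qed.

Lemma SS_const X s x y : s \in SS X -> connect (rr X) x y -> s x = s y.
Proof.
rewrite inSS => /forallP H /connectP [pth]; elim: pth x => [|z pth IH] x /=.
  by move=> _ ->.
case/andP => Hxz Hp Hy; rewrite -(IH z Hp Hy).
by have /forallP /(_ z) /implyP /(_ Hxz) /eqP := H x.
Qed.

Lemma inSS_U1 X e s :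
  (s \in SS (X :|: [set e])) = (s \in SS X) && (s (e, true) == s (e, false)).
Proof.
rewrite !inE; apply/idP/idP.
- case/andP => -> /forallP H /=; apply/andP; split.
  + by apply/forallP => e'; apply/implyP => He'; have := H e'; rewrite !inE He'.
  + by have := H e; rewrite !inE eqxx orbT.
- case/andP => /andP [-> /forallP H] He /=; apply/forallP => e'.
  rewrite !inE; apply/implyP => /orP [He'|/eqP ->] //.
  by have := H e'; rewrite He'.
Qed.

Definition upd (s : {ffun E * bool -> T}) X y0 (v : T) : {ffun E * bool -> T} :=
  [ffun d => if connect (rr X) y0 d then v else s d].

Lemma upd_in X y0 s v : s \in SS X -> upd s X y0 v \in SS X.
Proof.
rewrite !inSS => /forallP H; apply/forallP => x; apply/forallP => z.
apply/implyP => Hxz; rewrite !ffunE.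
have Hsym := sym_connect_sym (rr_sym X).
case Cx: (connect (rr X) y0 x); case Cz: (connect (rr X) y0 z) => //.
- by move: Cz; rewrite (connect_trans Cx (connect1 Hxz)).
- have Hzx : rr X z x by rewrite rr_sym.
  by move: Cx; rewrite (connect_trans Cz (connect1 Hzx)).
- by have /forallP /(_ z) /implyP /(_ Hxz) := H x.
Qed.

Lemma SS_dich X e :
  SS (X :|: [set e]) = SS X \/ #|SS X| = (#|SS (X :|: [set e])| * #|T|)%N.
Proof.
set x0 := (e, true); set y0 := (e, false).
have Hsym := sym_connect_sym (rr_sym X).
case C: (connect (rr X) y0 x0).
  left; apply/setP => s; rewrite inSS_U1; case Hs: (s \in SS X) => //=.
  by rewrite (SS_const Hs C) eqxx.
right.
pose psi (tv : {ffun E * bool -> T} * T) := upd tv.1 X y0 tv.2.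
have inj : {in setX (SS (X :|: [set e])) [set: T] &, injective psi}.
  move=> [t v] [t' v'] /setXP [Ht _] /setXP [Ht' _] /= Heq.
  have Hat d : upd t X y0 v d = upd t' X y0 v' d by rewrite /psi /= in Heq; rewrite Heq.
  have Hv : v = v'.
    by have := Hat y0; rewrite !ffunE connect0.
  subst v'; congr pair; apply/ffunP => d.
  move: Ht Ht'; rewrite !inSS_U1 => /andP [Ht /eqP Htx] /andP [Ht' /eqP Htx'].
  case Cd: (connect (rr X) y0 d).
  - rewrite -(SS_const Ht Cd) -(SS_const Ht' Cd) -Htx -Htx'.
    have := Hat x0; rewrite !ffunE.
    by rewrite /x0 /y0 in C *; rewrite C.
  - by have := Hat d; rewrite !ffunE Cd.
have -> : SS X = psi @: setX (SS (X :|: [set e])) [set: T].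
  apply/setP => s; apply/idP/imsetP.
  - move=> Hs; exists (upd s X y0 (s x0), s y0).
      rewrite in_setX in_setT andbT inSS_U1 upd_in //= !ffunE connect0.
      by rewrite /x0 /y0 in C *; rewrite C eqxx.
    apply/ffunP => d; rewrite /psi /= !ffunE.
    case Cd: (connect (rr X) y0 d) => //; by rewrite (SS_const Hs Cd).
  - case=> [[t v]] /setXP [Ht _] -> /=; apply: upd_in.
    by move: Ht; rewrite inSS_U1 => /andP [].
by rewrite (card_in_imset inj) cardsX cardsT.
Qed.

End Spin.

Section LG.
Variables (I : finType) (f : {set I} -> nat).
Hypothesis fpos : forall X, 0 < f X.
Hypothesis floc : forall Z e g,
  f (Z :|: [set e]) * f (Z :|: [set g]) <= f Z * f (Z :|: [set e] :|: [set g]).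

Lemma LG_mono n W W' d : #|W' :\: W| = n -> W \subset W' ->
  f (W :|: [set d]) * f W' <= f W * f (W' :|: [set d]).
Proof.
elim: n W => [|n IH] W.
  move=> /eqP; rewrite cards_eq0 setD_eq0 => H1 H2.
  have E0 : W' = W by apply/eqP; rewrite eqEsubset H1 H2.
  by rewrite E0 mulnC.
move=> Hc Hs.
have [g Hg] : exists g, g \in W' :\: W.
  by apply/card_gt0P; rewrite Hc.
move: (Hg); rewrite inE => /andP [HgW HgW'].
have Hc' : #|W' :\: (W :|: [set g])| = n.
  have E1 : W' :\: (W :|: [set g]) = (W' :\: W) :\ g.
    by apply/setP => z; rewrite !inE; case: (z \in W); case: (z == g); case: (z \in W').

  by have := cardsD1 g (W' :\: W); rewrite Hg Hc E1 add1n => [[]].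
have Hs' : W :|: [set g] \subset W'.
  by rewrite subUset Hs sub1set.
have H1 := floc W d g.
have H2 := IH _ Hc' Hs'.
rewrite setUAC in H2.
have P1 := fpos (W :|: [set g]).
have P2 := fpos (W :|: [set d] :|: [set g]).
have := leq_mul H1 H2.
set A := f (W :|: [set g]); set B := f (W :|: [set d] :|: [set g]).
have -> : f (W :|: [set d]) * A * (B * f W') = (A * B) * (f (W :|: [set d]) * f W') by ring.
have -> : f W * B * (A * f (W' :|: [set d])) = (A * B) * (f W * f (W' :|: [set d])) by ring.
by rewrite leq_pmul2l // muln_gt0 P1 P2.
Qed.

Lemma LG n X Y : #|Y :\: X| = n -> f X * f Y <= f (X :&: Y) * f (X :|: Y).
Proof.
elim: n Y => [|n IH] Y.
  move=> /eqP; rewrite cards_eq0 setD_eq0 => H.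
  by rewrite (setIidPr H) (setUidPl H) mulnC.
move=> Hc.
have [d Hd] : exists d, d \in Y :\: X by apply/card_gt0P; rewrite Hc.
move: (Hd); rewrite inE => /andP [HdX HdY].
set Y' := Y :\ d.
have Hc' : #|Y' :\: X| = n.
  have E1 : Y' :\: X = (Y :\: X) :\ d.
    by apply/setP => z; rewrite !inE; case: (z \in X); case: (z == d); case: (z \in Y).
  by have := cardsD1 d (Y :\: X); rewrite Hd Hc E1 add1n => [[]].
have H1 := IH _ Hc'.
have H2 := @LG_mono _ Y' (X :|: Y') d (erefl _) (subsetUr _ _).
have EY : Y' :|: [set d] = Y.
  by apply/setP => z; rewrite !inE; case: (eqVneq z d) => [->|] /=; rewrite ?HdY ?orbT // orbF.
have EU : X :|: Y' :|: [set d] = X :|: Y by rewrite -setUA EY.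
have EI : X :&: Y' = X :&: Y.
  by apply/setP => z; rewrite !inE; case: (eqVneq z d) => [->|] /=; rewrite ?(negbTE HdX).
rewrite EY EU in H2; rewrite EI in H1.
have P1 := fpos Y'.
have P2 := fpos (X :|: Y').
have := leq_mul H1 H2.
set A := f Y'; set B := f (X :|: Y').
have -> : f X * A * (f Y * B) = (A * B) * (f X * f Y) by ring.
have -> : f (X :&: Y) * B * (A * f (X :|: Y)) = (A * B) * (f (X :&: Y) * f (X :|: Y)) by ring.
by rewrite leq_pmul2l // muln_gt0 P1 P2.
Qed.

Lemma LG_all X Y : f X * f Y <= f (X :&: Y) * f (X :|: Y).
Proof. exact: (LG (erefl _)). Qed.
End LG.

Local Open Scope ring_scope.

Section Marg.
Variables (R : realFieldType) (I J : finType).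

Definition jLSM (G : {set I} -> {set J} -> R) := forall x1 x2 y1 y2,
  G x1 y1 * G x2 y2 <= G (x1 :&: x2) (y1 :&: y2) * G (x1 :|: x2) (y1 :|: y2).
Definition nng (G : {set I} -> {set J} -> R) := forall x y, 0 <= G x y.

Definition step b (G : {set I} -> {set J} -> R) x y :=
  G x (y :\ b) + G x (y :|: [set b]).

Lemma ad_key (u v be ga : R) : 0 <= be -> be <= u -> 0 <= ga -> ga <= u ->
  be * ga <= u * v -> 0 <= v -> be + ga <= u + v.
Proof.
move=> h1 h2 h3 h4 h5 h6.
have [u0|upos] := eqVneq u 0.
  have be0 : be = 0 by apply/le_anti; rewrite h1 -u0 h2.
  have ga0 : ga = 0 by apply/le_anti; rewrite h3 -u0 h4.
  by rewrite be0 ga0 u0 addr0 add0r.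
have up : 0 < u by rewrite lt_def upos (le_trans h1 h2).
have : 0 <= (u - be) * (u - ga) by apply: mulr_ge0; rewrite subr_ge0.
move=> hp.
have : u * (be + ga) <= u * (u + v) by nra.
by rewrite ler_pM2l.
Qed.

Lemma step_LSM b G : nng G -> jLSM G -> nng (step b G) /\ jLSM (step b G).
Proof.
move=> nG lG; split; first by move=> x y; rewrite /step addr_ge0.
move=> x1 x2 y1 y2; rewrite /step.
set y10 := y1 :\ b; set y11 := y1 :|: [set b]; set y20 := y2 :\ b; set y21 := y2 :|: [set b].
have E1 : (y1 :&: y2) :\ b = y10 :&: y20.
  by apply/setP => z; rewrite !inE; case: (z == b); case: (z \in y1); case: (z \in y2).
have E2 : (y1 :&: y2) :\ b = y10 :&: y21.
  by apply/setP => z; rewrite !inE; case: (z == b); case: (z \in y1); case: (z \in y2).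
have E3 : (y1 :&: y2) :\ b = y11 :&: y20.
  by apply/setP => z; rewrite !inE; case: (z == b); case: (z \in y1); case: (z \in y2).
have E4 : (y1 :&: y2) :|: [set b] = y11 :&: y21.
  by apply/setP => z; rewrite !inE; case: (z == b); case: (z \in y1); case: (z \in y2).
have F1 : (y1 :|: y2) :\ b = y10 :|: y20.
  by apply/setP => z; rewrite !inE; case: (z == b); case: (z \in y1); case: (z \in y2).
have F2 : (y1 :|: y2) :|: [set b] = y10 :|: y21.
  by apply/setP => z; rewrite !inE; case: (z == b); case: (z \in y1); case: (z \in y2).
have F3 : (y1 :|: y2) :|: [set b] = y11 :|: y20.
  by apply/setP => z; rewrite !inE; case: (z == b); case: (z \in y1); case: (z \in y2).
have F4 : (y1 :|: y2) :|: [set b] = y11 :|: y21.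
  by apply/setP => z; rewrite !inE; case: (z == b); case: (z \in y1); case: (z \in y2).
have ha := lG x1 x2 y10 y20; rewrite -E1 -F1 in ha.
have hb := lG x1 x2 y10 y21; rewrite -E2 -F2 in hb.
have hc := lG x1 x2 y11 y20; rewrite -E3 -F3 in hc.
have hd := lG x1 x2 y11 y21; rewrite -E4 -F4 in hd.
set L0 := G (x1 :&: x2) ((y1 :&: y2) :\ b) in ha hb hc *.
set L1 := G (x1 :&: x2) ((y1 :&: y2) :|: [set b]) in hd *.
set U0 := G (x1 :|: x2) ((y1 :|: y2) :\ b) in ha *.
set U1 := G (x1 :|: x2) ((y1 :|: y2) :|: [set b]) in hb hc hd *.
set A0 := G x1 y10 in ha hb *; set A1 := G x1 y11 in hc hd *.
set B0 := G x2 y20 in ha hc *; set B1 := G x2 y21 in hb hd *.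
have key : A0 * B1 + A1 * B0 <= L0 * U1 + L1 * U0.
  apply: ad_key => //; rewrite ?mulr_ge0 ?nG //.
  have -> : A0 * B1 * (A1 * B0) = (A0 * B0) * (A1 * B1) by ring.
  have -> : L0 * U1 * (L1 * U0) = (L0 * U0) * (L1 * U1) by ring.
  by apply: ler_pM; rewrite ?mulr_ge0 ?nG.
rewrite !mulrDl !mulrDr.
have := lerD (lerD ha key) hd.
set T1 := A0 * B0; set T2 := A0 * B1; set T3 := A1 * B0; set T4 := A1 * B1.
set S1 := L0 * U0; set S2 := L0 * U1; set S3 := L1 * U0; set S4 := L1 * U1.
by move=> H; rewrite !addrA in H *.
Qed.

Fixpoint Hs (s : seq J) G : {set I} -> {set J} -> R :=
  if s is b :: s' then step b (Hs s' G) else G.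

Lemma Hs_LSM s G : nng G -> jLSM G -> nng (Hs s G) /\ jLSM (Hs s G).
Proof.
move=> nG lG; elim: s => [|b s [IH1 IH2]] //=.
exact: step_LSM.
Qed.

Lemma toggle (b : J) (phi : {set J} -> R) :
  \sum_(y : {set J}) phi y = \sum_(y : {set J} | b \notin y) (phi y + phi (y :|: [set b])).
Proof.
rewrite (bigID (fun y : {set J} => b \in y)) /= addrC big_split /=; congr (_ + _).
pose tau (y : {set J}) := if b \in y then y :\ b else y :|: [set b].
have tauK : involutive tau.
  move=> y; rewrite /tau; case Hb: (b \in y).
  - rewrite !inE eqxx /=; apply/setP => z; rewrite !inE; by case: (eqVneq z b) => [->|] /=; rewrite ?Hb ?orbF.
  - rewrite !inE eqxx orbT; apply/setP => z; rewrite !inE.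
    by case: (eqVneq z b) => [->|] /=; rewrite ?Hb ?orbF.
rewrite (reindex_inj (inv_inj tauK)) /=.
apply: eq_big => y; rewrite /tau; case Hb: (b \in y) => //=.
- by rewrite !inE eqxx.
- by rewrite !inE eqxx orbT.
- by rewrite !inE eqxx.
Qed.

Lemma Hs_sum s G x : uniq s ->
  \sum_y G x y = \sum_(y | y :&: [set:: s] == set0) Hs s G x y.
Proof.
elim: s => [|b s IH] /=.
  move=> _; apply: eq_bigl => y; apply/esym/eqP/setP => z; rewrite !inE.
  by case: (z \in y).
case/andP => Hb Hu; rewrite IH //.
rewrite big_mkcond (toggle b) /= [RHS]big_mkcond /=.
rewrite [RHS](bigID (fun y : {set J} => b \notin y)) /= [X in _ + X]big1; last first.
  move=> y; rewrite negbK => Hy; case: eqP => // /setP /(_ b).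
  by rewrite !inE Hy eqxx.
rewrite addr0; apply: eq_bigr => y Hy.
have E1 : (y :|: [set b]) :&: [set:: s] = y :&: [set:: s].
  apply/setP => w; rewrite !inE; case: (eqVneq w b) => [->|] /=.
    by rewrite (negbTE Hb) !andbF.
  by rewrite orbF.
have E2 : (y :&: [set:: b :: s] == set0) = (y :&: [set:: s] == set0).
  apply/idP/idP => /eqP H; apply/eqP/setP => w; move/setP: H => /(_ w); rewrite !inE.
    by case: (w \in y); case: (w \in s); rewrite ?orbT.
  by case: (eqVneq w b) => [->|] //=; rewrite (negbTE Hy).
have E3 : y :\ b = y.
  apply/setP => w; rewrite !inE; case: (eqVneq w b) => [->|] //=.
  by rewrite (negbTE Hy).
rewrite /step E1 E2 E3; by case: ifP => _; rewrite ?addr0.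
Qed.

Lemma marginal_LSM G : nng G -> jLSM G -> forall x1 x2,
  (\sum_y G x1 y) * (\sum_y G x2 y) <=
  (\sum_y G (x1 :&: x2) y) * (\sum_y G (x1 :|: x2) y).
Proof.
move=> nG lG x1 x2.
have Hm x : \sum_y G x y = Hs (enum J) G x set0.
  rewrite (@Hs_sum (enum J) G x (enum_uniq _)) (big_pred1 set0) // => y /=.
  have -> : [set:: enum J] = [set: J] by apply/setP => z; rewrite !inE mem_enum.
  by rewrite setIT.
rewrite !Hm; have [_ L] := Hs_LSM (enum J) nG lG.
by have := L x1 x2 set0 set0; rewrite setI0 setU0.
Qed.
End Marg.

Lemma N_LSM (E T : finType) (p : E * bool -> E * bool) (t0 : T) (X Y : {set E}) :
  (#|SS T p X| * #|SS T p Y| <= #|SS T p (X :&: Y)| * #|SS T p (X :|: Y)|)%N.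
Proof.
apply: (LG_all (f := fun X => #|SS T p X|)).
- move=> Z; apply/card_gt0P; exists [ffun=> t0]; rewrite inE.
  by apply/andP; split; apply/forallP => d; rewrite ?ffunE ?eqxx ?implybT.
- move=> Z e g /=.
  have sub W e' : SS T p (W :|: [set e']) \subset SS T p W.
    by apply/subsetP => s; rewrite inSS_U1 => /andP [].
  have EAB : SS T p (Z :|: [set e] :|: [set g]) = SS T p (Z :|: [set g] :|: [set e]).
    by rewrite setUAC.
  case: (SS_dich T p Z e) => [HA|HA].
  + have -> : SS T p (Z :|: [set e] :|: [set g]) = SS T p (Z :|: [set g]).
      by apply/setP => s; rewrite inSS_U1 HA -inSS_U1.
    by rewrite HA.
  + case: (SS_dich T p (Z :|: [set g]) e) => [HB|HB].
    * rewrite EAB HB; apply: leq_mul => //; exact: subset_leq_card.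
    * by rewrite HB HA EAB mulnAC mulnA.
Qed.

Section Main.
Variables (R : rcfType) (E : finType) (rot : {perm E * bool}).
Variables (Q Q' : {fset R[i]}) (a b : R).
Hypotheses (ha : 0 < a) (hb : 0 < b) (hab : a + b <= 1).

Definition ttw (o os : bool) : R :=
  if o && ~~ os then a else if ~~ o && os then b
  else if o && os then 1 - a - b else 0.

Definition Tw (x w : {set E}) : R :=
  if x :|: w == setT then a ^+ #|~: w| * b ^+ #|~: x| * (1 - a - b) ^+ #|x :&: w|
  else 0.

Lemma prod_tt (x w : {set E}) : \prod_e ttw (e \in x) (e \in w) = Tw x w.
Proof.
rewrite /Tw; case: eqP => H.
- have Ht e : ttw (e \in x) (e \in w) =
     (if e \in ~: w then a else 1) * (if e \in ~: x then b else 1) *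
     (if e \in x :&: w then 1 - a - b else 1).
    have : e \in x :|: w by rewrite H inE.
    rewrite !inE /ttw; case: (e \in x); case: (e \in w) => //= _;
      by rewrite ?mulr1 ?mul1r.
  rewrite (eq_bigr _ (fun e _ => Ht e)) !big_split /= -!big_mkcond !prodr_const.
  done.
- have /subsetPn [e _ He] : ~~ (setT \subset x :|: w) by rewrite subTset; apply/eqP.
  rewrite (bigD1 e) //=; move: He; rewrite !inE negb_or => /andP [/negbTE -> /negbTE ->].
  by rewrite /ttw /= mul0r.
Qed.


Definition okV (s : {ffun E * bool -> Q}) (x w : {set E}) :=
  [forall e, (e \in eta_v s) ==> (e \notin x) && (e \in w)].
Definition okF (s' : {ffun E * bool -> Q'}) (x w : {set E}) :=
  [forall e, (e \in eta_f s') ==> (e \in x) && (e \notin w)].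

Lemma prod_bool (c : pred E) : \prod_e ((c e)%:R : R) = ([forall e, c e])%:R.
Proof.
case: forallP => H.
- by rewrite big1 // => e _; rewrite H.
- have /forallPn [e He] : ~~ [forall e, c e] by apply/forallP.
  by rewrite (bigD1 e) //= (negbTE He) mul0r.
Qed.

Lemma forall_andE (A B : pred E) :
  [forall e, A e && B e] = [forall e, A e] && [forall e, B e].
Proof.
apply/forallP/andP.
- by move=> H; split; apply/forallP => e; case/andP: (H e).
- by case=> /forallP H1 /forallP H2 e; rewrite H1 H2.
Qed.

Lemma weight_prod s s' (x w : {set E}) :
  spin_weight rot a b s s' * \prod_e pair_law a b s s' e (e \in x) (e \in w) =
  if (vspin rot s && okV s x w) && (fspin rot s' && okF s' x w) then Tw x w else 0.
Proof.
rewrite /spin_weight /admissible.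
case Hv: (vspin rot s); case Hf: (fspin rot s') => /=; rewrite ?andbF ?mul0r //.
case Hd: [disjoint eta_v s & eta_f s'].
- have -> : a ^+ #|eta_f s'| = \prod_(e in eta_f s') a by rewrite prodr_const.
  have -> : b ^+ #|eta_v s| = \prod_(e in eta_v s) b by rewrite prodr_const.
  rewrite !(big_mkcond (fun e => e \in _)) -!big_split /=.
  have Hpe e : (if e \in eta_f s' then a else 1) * (if e \in eta_v s then b else 1) *
      pair_law a b s s' e (e \in x) (e \in w) =
      ((((e \in eta_v s) ==> (e \notin x) && (e \in w)) &&
        ((e \in eta_f s') ==> (e \in x) && (e \notin w)))%:R) * ttw (e \in x) (e \in w).
    rewrite /pair_law /ttw.
    case HF: (e \in eta_f s'); case HV: (e \in eta_v s).
    + by rewrite (disjointFr Hd HV) in HF.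
    + by case: (e \in x); case: (e \in w); rewrite /= ?mulr1 ?mul1r ?mulr0 ?mul0r.
    + by case: (e \in x); case: (e \in w); rewrite /= ?mulr1 ?mul1r ?mulr0 ?mul0r.
    + by case: (e \in x); case: (e \in w); rewrite /= ?mulr1 ?mul1r ?mulr0 ?mul0r.
  rewrite (eq_bigr _ (fun e _ => Hpe e)) big_split /= prod_bool prod_tt forall_andE.
  rewrite -/(okV s x w) -/(okF s' x w).
  by case: (okV s x w && okF s' x w); rewrite ?mul1r ?mul0r.
- rewrite mul0r.
  suff -> : okV s x w && okF s' x w = false by [].
  apply/negP => /andP [/forallP HV /forallP HF]; move/negP: Hd; apply.
  rewrite disjoint_subset; apply/subsetP => e He1; rewrite inE /=; apply/negP => He2.
  have := HV e; rewrite He1 /= => /andP [Hx _].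
  by have := HF e; rewrite He2 /= (negbTE Hx).
Qed.


Lemma sum_if (S : finType) (A : pred S) (P : R) :
  \sum_s (if A s then P else 0) = P * (#|A|)%:R.
Proof. by rewrite -big_mkcond /= sumr_const mulr_natr. Qed.

Lemma sum_cond (S1 S2 : finType) (A : pred S1) (B : pred S2) (P : R) :
  \sum_s1 \sum_s2 (if A s1 && B s2 then P else 0) = P * (#|A|)%:R * (#|B|)%:R.
Proof.
have H s1 : \sum_s2 (if A s1 && B s2 then P else 0) = if A s1 then P * (#|B|)%:R else 0.
  by case: (A s1) => /=; [rewrite sum_if | rewrite big1].
rewrite (eq_bigr _ (fun s1 _ => H s1)) sum_if.
by rewrite mulrAC.
Qed.


Lemma sum_weight (x w : {set E}) :
  \sum_(s : {ffun E * bool -> Q}) \sum_(s' : {ffun E * bool -> Q'}) spin_weight rot a b s s' * \prod_e pair_law a b s s' e (e \in x) (e \in w)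
  = Tw x w * (#|SS Q rot x|)%:R * (#|SS Q' (fperm rot) w|)%:R.
Proof.
under eq_bigr do under eq_bigr do rewrite weight_prod.
rewrite sum_cond.
case H: (x :|: w == setT); last by rewrite /Tw H !mul0r.
have HT e : (e \in x) || (e \in w) by rewrite -in_setU (eqP H) inE.
congr (_ * _%:R * _%:R); apply: eq_card => s; rewrite !inE.
- congr (_ && _); apply: eq_forallb => e; rewrite inE val_eqE.
  move: (HT e); case: (e \in x); case: (e \in w); case: (s (e, true) == s (e, false)) => //.
- congr (_ && _); apply: eq_forallb => e; rewrite inE val_eqE.
  move: (HT e); case: (e \in x); case: (e \in w); case: (s (e, true) == s (e, false)) => //.
Qed.


Lemma nu_eq (x : {set E}) : nu rot Q Q' a b x = (Zpart rot Q Q' a b)^-1 *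
  \sum_w (Tw x w * (#|SS Q rot x|)%:R * (#|SS Q' (fperm rot) w|)%:R).
Proof.
rewrite /nu /joint_law.
rewrite [RHS]mulr_sumr.
under [RHS]eq_bigr => w _ do rewrite -sum_weight.
under [RHS]eq_bigr => w _ do rewrite mulr_sumr.
under [RHS]eq_bigr => w _ do under eq_bigr => s _ do rewrite mulr_sumr.
rewrite [RHS]exchange_big /=; apply: eq_bigr => s _.
rewrite [RHS]exchange_big /=; apply: eq_bigr => s' _.
apply: eq_bigr => w _.
by rewrite mulrAC mulrC.
Qed.


Variables (t0 : Q) (t0' : Q').

Definition W (x w : {set E}) : R :=
  Tw x w * (#|SS Q rot x|)%:R * (#|SS Q' (fperm rot) w|)%:R.

Lemma d_ge0 : 0 <= 1 - a - b.
Proof. by rewrite -addrA -opprD subr_ge0. Qed.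

Lemma Tw_ge0 x w : 0 <= Tw x w.
Proof.
rewrite /Tw; case: ifP => // _.
by apply: mulr_ge0; [apply: mulr_ge0|]; apply: exprn_ge0; [exact: ltW ha|exact: ltW hb|exact: d_ge0].
Qed.

Lemma W_ge0 x w : 0 <= W x w.
Proof. by rewrite /W !mulr_ge0 // Tw_ge0. Qed.

Lemma hU (A B : {set E}) : A :|: B = setT -> (#|A :&: B| + #|E| = #|A| + #|B|)%N.
Proof. by move=> H; rewrite -cardsUI H cardsT addnC. Qed.

Lemma Tw_mod x1 x2 w1 w2 : x1 :|: w1 = setT -> x2 :|: w2 = setT ->
  Tw x1 w1 * Tw x2 w2 = Tw (x1 :&: x2) (w1 :|: w2) * Tw (x1 :|: x2) (w1 :&: w2).
Proof.
move=> H1 H2.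
have C1 : (x1 :&: x2) :|: (w1 :|: w2) = setT.
  apply/setP => e; move/setP: H1 => /(_ e); move/setP: H2 => /(_ e); rewrite !inE.
  by case: (e \in x1); case: (e \in x2); case: (e \in w1); case: (e \in w2).
have C2 : (x1 :|: x2) :|: (w1 :&: w2) = setT.
  apply/setP => e; move/setP: H1 => /(_ e); move/setP: H2 => /(_ e); rewrite !inE.
  by case: (e \in x1); case: (e \in x2); case: (e \in w1); case: (e \in w2).
rewrite /Tw H1 H2 C1 C2 !eqxx.
have ea : (#|~: (w1 :|: w2)| + #|~: (w1 :&: w2)| = #|~: w1| + #|~: w2|)%N.
  by rewrite setCU setCI addnC cardsUI.
have eb : (#|~: (x1 :&: x2)| + #|~: (x1 :|: x2)| = #|~: x1| + #|~: x2|)%N.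
  by rewrite setCU setCI cardsUI.
have ed : (#|(x1 :&: x2) :&: (w1 :|: w2)| + #|(x1 :|: x2) :&: (w1 :&: w2)|
           = #|x1 :&: w1| + #|x2 :&: w2|)%N.
  have := hU C1; have := hU C2; have := hU H1; have := hU H2.
  have := cardsUI x1 x2; have := cardsUI w1 w2; lia.
have EE (n1 n2 m1 m2 k1 k2 : nat) :
  a ^+ n1 * b ^+ m1 * (1 - a - b) ^+ k1 * (a ^+ n2 * b ^+ m2 * (1 - a - b) ^+ k2) =
  a ^+ (n1 + n2) * b ^+ (m1 + m2) * (1 - a - b) ^+ (k1 + k2).
  by rewrite !exprD; ring.
by rewrite !EE ea eb ed.
Qed.

Lemma W_LSM x1 x2 w1 w2 :
  W x1 w1 * W x2 w2 <= W (x1 :&: x2) (w1 :|: w2) * W (x1 :|: x2) (w1 :&: w2).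
Proof.
case H1: (x1 :|: w1 == setT); last first.
  by rewrite /W {1}/Tw H1 !mul0r mulr_ge0 // W_ge0.
case H2: (x2 :|: w2 == setT); last first.
  by rewrite /W [Tw x2 w2]/Tw H2 !mul0r mulr0 mulr_ge0 // W_ge0.
rewrite /W.
set N1 := (#|SS Q rot x1|)%:R; set N2 := (#|SS Q rot x2|)%:R.
set N3 := (#|SS Q rot (x1 :&: x2)|)%:R; set N4 := (#|SS Q rot (x1 :|: x2)|)%:R.
set M1 := (#|SS Q' (fperm rot) w1|)%:R; set M2 := (#|SS Q' (fperm rot) w2|)%:R.
set M3 := (#|SS Q' (fperm rot) (w1 :|: w2)|)%:R; set M4 := (#|SS Q' (fperm rot) (w1 :&: w2)|)%:R.
have HN : N1 * N2 <= N3 * N4 :> R.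
  by rewrite /N1 /N2 /N3 /N4 -!natrM ler_nat (N_LSM _ t0).
have HM : M1 * M2 <= M3 * M4 :> R.
  by rewrite /M1 /M2 /M3 /M4 -!natrM ler_nat [X in (_ <= X)%N]mulnC (N_LSM _ t0').
have HT := Tw_mod (eqP H1) (eqP H2).
have -> : Tw x1 w1 * N1 * M1 * (Tw x2 w2 * N2 * M2) = (Tw x1 w1 * Tw x2 w2) * (N1 * N2) * (M1 * M2) by ring.
have -> : Tw (x1 :&: x2) (w1 :|: w2) * N3 * M3 * (Tw (x1 :|: x2) (w1 :&: w2) * N4 * M4)
  = (Tw (x1 :&: x2) (w1 :|: w2) * Tw (x1 :|: x2) (w1 :&: w2)) * (N3 * N4) * (M3 * M4) by ring.
rewrite HT; apply: ler_pM => //; rewrite ?mulr_ge0 ?Tw_ge0 ?ler0n //.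
by apply: ler_pM; rewrite ?mulr_ge0 ?Tw_ge0 ?ler0n.
Qed.


Lemma nu_LSM (xi1 xi2 : {set E}) :
  nu rot Q Q' a b xi1 * nu rot Q Q' a b xi2 <=
  nu rot Q Q' a b (xi1 :&: xi2) * nu rot Q Q' a b (xi1 :|: xi2).
Proof.
set k := (Zpart rot Q Q' a b)^-1.
have k0 : 0 <= k.
  rewrite invr_ge0; apply: sumr_ge0 => s _; apply: sumr_ge0 => s' _.
  rewrite /spin_weight; case: ifP => // _.
  by apply: mulr_ge0; apply: exprn_ge0; [exact: ltW ha|exact: ltW hb].
pose G x y := W x (~: y).
have Mx x : nu rot Q Q' a b x = k * \sum_y G x y.
  by rewrite nu_eq (reindex_inj (@setC_inj E)).
have nG : nng G by move=> x y; exact: W_ge0.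
have lG : jLSM G.
  by move=> x1 x2 y1 y2; rewrite /G setCI setCU; exact: W_LSM.
have HM := marginal_LSM nG lG xi1 xi2.
rewrite !Mx.
set m1 := \sum_y G xi1 y; set m2 := \sum_y G xi2 y.
set m3 := \sum_y G (xi1 :&: xi2) y; set m4 := \sum_y G (xi1 :|: xi2) y.
have -> : k * m1 * (k * m2) = (k * k) * (m1 * m2) by ring.
have -> : k * m3 * (k * m4) = (k * k) * (m3 * m4) by ring.
by apply: ler_wpM2l => //; rewrite mulr_ge0.
Qed.

End Main.

Unset Implicit Arguments.

Theorem proposition4p2 (R : rcfType) (E : finType) (rot : {perm E * bool})
  (q q' : nat) (Q Q' : {fset R[i]}) (a b : R) :
  map_connected rot ->
  (1 <= q)%N -> (1 <= q')%N -> (#|` Q| = q)%fset -> (#|` Q'| = q')%fset ->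
  (forall x, x \in Q -> - x \in Q) -> (forall x, x \in Q' -> - x \in Q') ->
  0 < a -> a <= 1 -> 0 < b -> b <= 1 ->
  a + b <= 1 ->
  forall xi1 xi2 : {set E},
    nu rot Q Q' a b (xi1 :&: xi2) * nu rot Q Q' a b (xi1 :|: xi2)
      >= nu rot Q Q' a b xi1 * nu rot Q Q' a b xi2.
Proof.
move=> _ hq hq' HQ HQ' _ _ ha _ hb _ hab xi1 xi2.
have : Q != fset0 by rewrite -cardfs_gt0 HQ.
case/fset0Pn => x0 Hx0.
have : Q' != fset0 by rewrite -cardfs_gt0 HQ'.
case/fset0Pn => x1 Hx1.

exact: (nu_LSM rot ha hb hab (FSetSub Hx0) (FSetSub Hx1)).
Qed.
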